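(* Let $0\le k,k',\ell,\ell'<p+1$. Then $\varphi_{k,\ell}$ is equivalent to $\varphi_{k',\ell'}$ (i.e. conjugate by an element of $\mathrm{GL}_2(\overline{\mathbb{F}}_p)$) if and only if $\{k,\ell\}=\{k',\ell'\}$.
   Context: $p$ odd prime; $\mathcal{G}_F=\mathrm{Gal}(\overline{\mathbb{Q}}_p/F)$, $\mathbb{Q}_{p^2}$ the unramified quadratic extension; $\mathrm{Fr}_p\in\mathcal{G}_{\mathbb{Q}_p}$ a fixed lift of geometric Frobenius (image of $p^{-1}$ under reciprocity normalized with uniformizers $\mapsto$ geometric Frobenius). $\omega_2$: the character of $\mathcal{G}_{\mathbb{Q}_{p^2}}$ given on inertia by $h\mapsto$ reduction of $h(\sqrt[p^2-1]{p})/\sqrt[p^2-1]{p}$, with $\omega_2(\mathrm{Fr}_p^2)=1$; $\mu_{2,-1}$ the unramified character with $\mathrm{Fr}_p^2\mapsto-1$. ${}^LG=\mathrm{GL}_2(\overline{\mathbb{F}}_p)\rtimes\mathcal{G}_{\mathbb{Q}_p}$, $\mathcal{G}_{\mathbb{Q}_{p^2}}$ acting trivially and $\mathrm{Fr}_pg\mathrm{Fr}_p^{-1}=\Phi_2(g^\top)^{-1}\Phi_2^{-1}$, $\Phi_2=\begin{pmatrix}0&1\\-1&0\end{pmatrix}$. $\varphi_{k,\ell}:\mathcal{G}_{\mathbb{Q}_p}\to{}^LG$ is the homomorphism with $\varphi_{k,\ell}(\mathrm{Fr}_p)=\begin{pmatrix}0&-1\\1&0\end{pmatrix}\mathrm{Fr}_p$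 and $\varphi_{k,\ell}(h)=\mathrm{diag}\big(\mu_{2,-1}\omega_2^{(1-p)k}(h),\mu_{2,-1}\omega_2^{(1-p)\ell}(h)\big)h$ for $h\in\mathcal{G}_{\mathbb{Q}_{p^2}}$. *)

(* Defs.v *)
From HB Require Import structures.
From mathcomp Require Import all_boot all_order all_algebra.
Set Implicit Arguments. Unset Strict Implicit. Unset Printing Implicit Defensive.
Import GRing.Theory.
Local Open Scope ring_scope.

(* F plays the role of \bar{F}_p : an algebraically closed field of char p. *)

Definition diag2 (F : fieldType) (a b : F) : 'M[F]_2 :=
  \matrix_(i < 2, j < 2) (if i == j then (if (i : nat) == 0%N then a else b) else 0).

Definition Phi2 (F : fieldType) : 'M[F]_2 :=
  \matrix_(i < 2, j < 2)
    (if ((i : nat) == 0%N) && ((j : nat) == 1%N) then 1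
     else if ((i : nat) == 1%N) && ((j : nat) == 0%N) then -1 else 0).

(* The matrix part [[0,-1],[1,0]] of varphi_{k,l}(Fr_p) *)
Definition Afr (F : fieldType) : 'M[F]_2 :=
  \matrix_(i < 2, j < 2)
    (if ((i : nat) == 0%N) && ((j : nat) == 1%N) then -1
     else if ((i : nat) == 1%N) && ((j : nat) == 0%N) then 1 else 0).

(* Action of an element sigma of G_{Q_p} on GL_2 in the L-group: trivial if
   sigma \in G_{Q_{p^2}} (fr = false), and g |-> Phi2 (g^T)^{-1} Phi2^{-1}
   if sigma \notin G_{Q_{p^2}} (fr = true).  *)
Definition gal_act (F : fieldType) (fr : bool) (g : 'M[F]_2) : 'M[F]_2 :=
  if fr then Phi2 F *m invmx (g^T) *m invmx (Phi2 F) else g.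

(* GL_2-component of varphi_{k,l}(sigma), where sigma is described by
   - eps = mu_{2,-1}(h) in {1,-1},
   - z   = omega_2^{1-p}(h), a (p+1)-th root of unity,
   - fr  = whether sigma = h Fr_p (true) or sigma = h (false),
   for the unique h in G_{Q_{p^2}} with sigma in {h, h Fr_p}.
   Indeed varphi(h Fr_p) = diag(..) h (A Fr_p) = (diag(..) A) Fr_p since h acts
   trivially on GL_2. *)
Definition phi_mat (F : fieldType) (k l : nat) (eps z : F) (fr : bool)
  : 'M[F]_2 :=
  let D := diag2 (eps * z ^+ k) (eps * z ^+ l) in
  if fr then D *m Afr F else D.

(* varphi_{k,l} and varphi_{k',l'} are GL_2(\bar F_p)-conjugate:
   exists g in GL_2 such that for all sigma,
   g varphi_{k,l}(sigma) g^{-1} = varphi_{k',l'}(sigma) in ^L G, i.e.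
   g * a(sigma) * sigma(g^{-1}) = a'(sigma) on GL_2-components.
   sigma ranges over all of G_{Q_p}: the pair (mu_{2,-1}(h), omega_2^{1-p}(h))
   ranges over all of {+-1} x mu_{p+1}(\bar F_p) as h ranges over G_{Q_{p^2}}. *)
Definition phi_equiv (F : fieldType) (p k l k' l' : nat) : Prop :=
  exists g : 'M[F]_2, g \in unitmx /\
    forall (eps z : F) (fr : bool),
      (eps = 1 \/ eps = -1) -> z ^+ p.+1 = 1 ->
      g *m phi_mat k l eps z fr *m gal_act fr (invmx g) = phi_mat k' l' eps z fr.

(* Main.v *)
Require Import Defs.
From HB Require Import structures.
From mathcomp Require Import all_boot all_order all_algebra.
From mathcomp Require Import all_fingroup all_solvable all_field zify.
Set Implicit Arguments. Unset Strict Implicit. Unset Printing Implicit Defensive.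
Import GRing.Theory.
Local Open Scope ring_scope.

Lemma prim_exists (F : closedFieldType) (n : nat) :
  (0 < n)%N -> (n%:R : F) != 0 -> exists z : F, n.-primitive_root z.
Proof.
move=> n0 nz.
pose P : {poly F} := 'X^n - 1.
have [r Pr] := closed_field_poly_normal P.
have monP : P \is monic by rewrite /P -(rmorph1 (@polyC F)) monicXnsubC.
rewrite (monicP monP) scale1r in Pr.
have szr : size r = n.
  have := size_XnsubC (1 : F) n0; rewrite rmorph1 -/P Pr size_prod_XsubC.
  by case.
have sepP : separable_poly P.
  rewrite unlock; apply/Bezout_coprimepP; exists (-1, (n%:R)^-1 *: 'X) => /=.
  rewrite /P derivB derivXn derivC subr0 -scalerAl mulrnAr -mulrnAl.
  rewrite mulrnAl -exprS prednK // -scaler_nat scalerA mulVf // scale1r.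
  by rewrite mulN1r opprB addrC addrC subrK eqpxx.
have ur : uniq r by rewrite -separable_prod_XsubC -Pr.
have : has n.-primitive_root r.
  apply: has_prim_root => //; last by rewrite szr.
  apply/allP => x xr; rewrite unity_rootE.
  have : root P x by rewrite Pr root_prod_XsubC.
  by rewrite /root /P !hornerE subr_eq0.
by case/hasP=> z _ pz; exists z.
Qed.

Definition Sw (F : fieldType) : 'M[F]_2 :=
  \matrix_(i < 2, j < 2) (if i == j then 0 else 1).

Ltac mx2 := apply/matrixP; case=> [[|[|?]] ?] //; case=> [[|[|?]] ?] //;
  rewrite !(mxE, big_ord_recl, big_ord0) /=;
  rewrite ?(mxE, mul0r, mulr0, mul1r, mulr1, add0r, addr0, mulN1r, mulrN1, opprK) //.

Lemma SwSw (F : fieldType) : Sw F *m Sw F = 1%:M.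
Proof. mx2. Qed.
Lemma AfrPhi (F : fieldType) : Afr F *m Phi2 F = 1%:M.
Proof. mx2. Qed.
Lemma PhiAfr (F : fieldType) : Phi2 F *m Afr F = 1%:M.
Proof. mx2. Qed.
Lemma SwT (F : fieldType) : (Sw F)^T = Sw F.
Proof. mx2. Qed.
Lemma SwDSw (F : fieldType) (a b : F) : Sw F *m diag2 a b *m Sw F = diag2 b a.
Proof. mx2. Qed.

Lemma I2P (i : 'I_2) : i = ord0 \/ i = lift ord0 ord0.
Proof. by case: i => [[|[|?]] ?]; [left|right|] => //; apply: val_inj. Qed.

Lemma mulD_entry (F : fieldType) (g : 'M[F]_2) a b i j :
  (g *m diag2 a b) i j = g i j * (if (j : nat) == 0%N then a else b).
Proof.
rewrite !(mxE, big_ord_recl, big_ord0).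
by case: (I2P i) => ->; case: (I2P j) => ->; rewrite /= ?mxE /=;
  rewrite ?(mxE, mul0r, mulr0, mul1r, mulr1, add0r, addr0) //.
Qed.

Lemma Dmul_entry (F : fieldType) (g : 'M[F]_2) a b i j :
  (diag2 a b *m g) i j = (if (i : nat) == 0%N then a else b) * g i j.
Proof.
rewrite !(mxE, big_ord_recl, big_ord0).
by case: (I2P i) => ->; case: (I2P j) => ->; rewrite /= ?mxE /=;
  rewrite ?(mxE, mul0r, mulr0, mul1r, mulr1, add0r, addr0) //.
Qed.

Lemma row_nz (F : fieldType) (g : 'M[F]_2) i : g \in unitmx ->
  exists j, g i j != 0.
Proof.
move=> gu; have := mulmxV gu; move/matrixP/(_ i i).
rewrite !(mxE, big_ord_recl, big_ord0) eqxx.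
case: (eqVneq (g i ord0) 0) => [h0|]; last by exists ord0.
case: (eqVneq (g i (lift ord0 ord0)) 0) => [h1|]; last by exists (lift ord0 ord0).
by rewrite h0 h1 !mul0r !addr0 => /eqP; rewrite eq_sym oner_eq0.
Qed.

Lemma col_nz (F : fieldType) (g : 'M[F]_2) j : g \in unitmx ->
  exists i, g i j != 0.
Proof.
move=> gu; have := mulVmx gu; move/matrixP/(_ j j).
rewrite !(mxE, big_ord_recl, big_ord0) eqxx.
case: (eqVneq (g ord0 j) 0) => [h0|]; last by exists ord0.
case: (eqVneq (g (lift ord0 ord0) j) 0) => [h1|]; last by exists (lift ord0 ord0).
by rewrite h0 h1 !mulr0 !addr0 => /eqP; rewrite eq_sym oner_eq0.
Qed.

Lemma swap_cases (k l k' l' : nat) : [:: k; l] =i [:: k'; l'] ->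
  (k' = k /\ l' = l) \/ (k' = l /\ l' = k).
Proof.
move=> Heq.
have := Heq k; have := Heq l; have := Heq k'; have := Heq l'; rewrite !inE !eqxx ?orbT /=.
move=> /esym h1 /esym h2 h3 h4.
move: h1 h2 h3 h4.
case: eqP; case: eqP; case: eqP; case: eqP; case: eqP; case: eqP; case: eqP; case: eqP; rewrite //=; lia.
Qed.

Theorem lemma6p18 (p : nat) (F : closedFieldType)
    (hp : prime p) (hodd : odd p) (hchar : p \in [pchar F])
    (k l k' l' : nat)
    (hk : (k < p.+1)%N) (hl : (l < p.+1)%N)
    (hk' : (k' < p.+1)%N) (hl' : (l' < p.+1)%N) :
  phi_equiv F p k l k' l' <-> [:: k; l] =i [:: k'; l'].
Proof.
split.
  move=> [g [gu H]].
  have n0 : (0 < p.+1)%N by [].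
  have nz : ((p.+1)%:R : F) != 0.
    by rewrite -addn1 natrD (pcharf0 hchar) add0r oner_eq0.
  have [z pz] := prim_exists n0 nz.
  have := H 1 z false (or_introl erefl) (prim_expr_order pz).
  rewrite /phi_mat /gal_act /= !mul1r => E.
  have E2 : g *m diag2 (z ^+ k) (z ^+ l) = diag2 (z ^+ k') (z ^+ l') *m g.
    by rewrite -E mulmxKV.
  pose e (i : 'I_2) := if (i : nat) == 0%N then k else l.
  pose e' (i : 'I_2) := if (i : nat) == 0%N then k' else l'.
  have Hent i j : g i j * z ^+ (e j) = z ^+ (e' i) * g i j.
    move/matrixP: E2 => /(_ i j); rewrite mulD_entry Dmul_entry /e /e'.
    by case: ((j : nat) == 0%N); case: ((i : nat) == 0%N).
  have zinj a b : (a < p.+1)%N -> (b < p.+1)%N -> z ^+ a = z ^+ b -> a = b.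
    move=> ha hb /eqP; rewrite (eq_prim_root_expr pz) !modn_small //.
    by move/eqP.
  have eb i : (e i < p.+1)%N by rewrite /e; case: ifP.
  have eb' i : (e' i < p.+1)%N by rewrite /e'; case: ifP.
  have R1 i : exists j, e' i = e j.
    have [j gj] := row_nz i gu; exists j; apply: zinj => //.
    by apply: (mulfI gj); rewrite Hent mulrC.
  have C1 j : exists i, e j = e' i.
    have [i gi] := col_nz j gu; exists i; apply: zinj => //.
    by apply: (mulfI gi); rewrite Hent mulrC.
  move=> x; rewrite !inE; apply/idP/idP.
    case/orP => /eqP ->.
      have [i Hi] := C1 ord0; rewrite [k](_ : k = e' i) //.
      by rewrite /e'; case: ifP; rewrite eqxx ?orbT.
    have [i Hi] := C1 (lift ord0 ord0); rewrite [l](_ : l = e' i) //.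
    by rewrite /e'; case: ifP; rewrite eqxx ?orbT.
  case/orP => /eqP ->.
    have [i Hi] := R1 ord0; rewrite [k'](_ : k' = e i) //.
    by rewrite /e; case: ifP; rewrite eqxx ?orbT.
  have [i Hi] := R1 (lift ord0 ord0); rewrite [l'](_ : l' = e i) //.
  by rewrite /e; case: ifP; rewrite eqxx ?orbT.
have Phiu : Phi2 F \in unitmx by case/mulmx1_unit: (PhiAfr F).
have invPhi : invmx (Phi2 F) = Afr F.
  by have := mulKmx Phiu (Afr F); rewrite PhiAfr mulmx1.
have Swu : Sw F \in unitmx by case/mulmx1_unit: (SwSw F).
have invSw : invmx (Sw F) = Sw F.
  by have := mulKmx Swu (Sw F); rewrite SwSw mulmx1.
case/swap_cases => [[-> ->]|[-> ->]].
  exists 1; split; first exact: unitmx1.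
  move=> eps z [] _ _; rewrite /gal_act invmx1 ?trmx1 ?invmx1 mul1mx //.
    by rewrite mulmx1 mulmxV // mulmx1.
  by rewrite mulmx1.
exists (Sw F); split => //.
move=> eps z [] _ _; rewrite /gal_act /phi_mat /= invSw.
  rewrite SwT invSw invPhi !mulmxA -[_ *m Afr F *m Phi2 F]mulmxA AfrPhi mulmx1.
  by rewrite SwDSw.
by rewrite SwDSw.
Qed.
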